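(* Let $M$ be a finite group whose order is divisible by the prime $p$. Let $y,z\in M$ and write $y=y_sy_u$, $z=z_sz_u$ as products of their commuting $p$-regular and $p$-parts. If $y_sz_u\neq z_uy_s$ and $z_sy_u\neq y_uz_s$, then $yz\neq zy$, $|\mathcal O_y^{\langle y,z\rangle}|\geq3$ and $|\mathcal O_z^{\langle y,z\rangle}|\geq3$. If in addition $y$ and $z$ are conjugate in $M$ and $\mathcal O_y^{\langle y,z\rangle}\cap\mathcal O_z^{\langle y,z\rangle}=\emptyset$, then the conjugacy class $\mathcal O_y^M$ is of type C.
   Context: $\mathcal O^H_x$ denotes the conjugacy class of $x$ in $H$. A conjugacy class $\mathcal O$ in a finite group $M$ is of type C if there exist $H\leq M$ and $r,s\in\mathcal O\cap H$ with: $rs\neq sr$; $\mathcal O_r^H\neq\mathcal O_s^H$; $H=\langle\mathcal O_r^H,\mathcal O_s^H\rangle$; and either $\min(|\mathcal O_r^H|,|\mathcal O_s^H|)>2$ or $\max(|\mathcal O_r^H|,|\mathcal O_s^H|)>4$. *)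

(* Defs.v *)
From mathcomp Require Import all_boot all_order all_fingroup all_solvable.
Set Implicit Arguments. Unset Strict Implicit. Unset Printing Implicit Defensive.
Local Open Scope group_scope.

Definition typeC (gT : finGroupType) (M : {group gT}) (O : {set gT}) : Prop :=
  exists (H : {group gT}) (r s : gT),
    [/\ H \subset M, r \in O :&: H, s \in O :&: H & r * s != s * r] /\
    [/\ r ^: H != s ^: H,
        H :=: <<(r ^: H) :|: (s ^: H)>> &
        (2 < minn #|r ^: H| #|s ^: H|)%N || (4 < maxn #|r ^: H| #|s ^: H|)%N].

(* Main.v *)
Require Import Defs.
From mathcomp Require Import all_boot all_order all_fingroup all_solvable.
Set Implicit Arguments. Unset Strict Implicit. Unset Printing Implicit Defensive.
Local Open Scope group_scope.

Lemma constt_pow (gT : finGroupType) (pi : nat_pred) (x : gT) : exists n, x.`_pi = x ^+ n.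
Proof. by have /cycleP[n ->] := cycle_constt pi x; exists n. Qed.

Lemma commute_constt (gT : finGroupType) (pi rho : nat_pred) (a b : gT) :
  commute a b -> commute a.`_pi b.`_rho.
Proof.
move=> cab; have [m ->] := constt_pow pi a; have [n ->] := constt_pow rho b.
exact: commuteX2.
Qed.

Lemma commute_constt_r (gT : finGroupType) (rho : nat_pred) (a b : gT) :
  commute a b -> commute a b.`_rho.
Proof. by move=> cab; have [n ->] := constt_pow rho b; exact: commuteX. Qed.

Lemma index2_odd (gT : finGroupType) (H C : {group gT}) g :
  C \subset H -> #|H : C| = 2 -> g \in H -> coprime 2 #[g] -> g \in C.
Proof.
move=> sCH iC gH cop.
have nCH := normal_norm (index2_normal sCH iC).
have gN : g \in 'N(C) := subsetP nCH g gH.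
apply: coset_idr => //.
have o1 : #[coset C g] %| 2.
  rewrite -iC -card_quotient //; apply: order_dvdG; exact: mem_quotient.
have o2 : #[coset C g] %| #[g] by apply: morph_order.
have : #[coset C g] %| gcdn 2 #[g] by rewrite dvdn_gcd o1 o2.
rewrite (eqP cop) dvdn1 order_eq1 => /eqP //.
Qed.

Lemma class_ge3 (gT : finGroupType) (p : nat) (pr_p : prime p) (y z : gT)
  (hA : y.`_p^' * z.`_p != z.`_p * y.`_p^')
  (hB : z.`_p^' * y.`_p != y.`_p * z.`_p^') :
  (3 <= #|y ^: <<[set y; z]>>|)%N.
Proof.
set H := <<[set y; z]>>%G.
have yH : y \in H by apply: mem_gen; rewrite !inE eqxx.
have zH : z \in H by apply: mem_gen; rewrite !inE eqxx orbT.
rewrite -index_cent1.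
have sCH : 'C_H[y] \subset H := subsetIl _ _.
have inC g : g \in 'C_H[y] -> commute g y by rewrite inE => /andP[_ /cent1P].
have nzC : z \notin 'C_H[y].
  apply/negP => /inC /commute_sym /(commute_constt p^' p) cz.
  by rewrite cz eqxx in hA.
rewrite leqNgt; apply/negP => lt3.
have := indexg_gt0 H 'C_H[y].
case E: #|H : 'C_H[y]| => [|[|[|k]]] // _; last by rewrite E in lt3.
  by move: (index1g sCH E) nzC => ->; rewrite zH.
case: (boolP (p == 2)) => [/eqP p2 | np2].
  have : z.`_p^' \in 'C_H[y].
    apply: (index2_odd sCH E); first by have [n ->] := constt_pow p^' z; exact: groupX.
    apply: (@pnat_coprime p); first by rewrite p2 pnat_id.
    exact: p_elt_constt.
  move/inC/(commute_constt_r p) => cz.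
  by rewrite cz eqxx in hB.
have : z.`_p \in 'C_H[y].
  apply: (index2_odd sCH E); first by have [n ->] := constt_pow p z; exact: groupX.
  rewrite coprime_sym; apply: (@pnat_coprime p); first exact: p_elt_constt.
  by rewrite pnatE // inE /= inE eq_sym.
move/inC/(commute_constt_r p^') => cz.
by rewrite cz eqxx in hA.
Qed.

Theorem lemma2p5 (gT : finGroupType) (M : {group gT}) (p : nat)
  (pr_p : prime p) (p_dvd : (p %| #|M|)%N) (y z : gT)
  (yM : y \in M) (zM : z \in M)
  (h1 : y.`_p^' * z.`_p != z.`_p * y.`_p^')
  (h2 : z.`_p^' * y.`_p != y.`_p * z.`_p^') :
  (y * z != z * y /\
   (3 <= #|y ^: <<[set y; z]>>|)%N /\ (3 <= #|z ^: <<[set y; z]>>|)%N) /\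
  (y \in z ^: M ->
   (y ^: <<[set y; z]>>) :&: (z ^: <<[set y; z]>>) = set0 ->
   typeC M (y ^: M)).
Proof.
have nc : y * z != z * y.
  apply/negP => /eqP /(commute_constt p^' p) cz.
  by rewrite cz eqxx in h1.
have c1 := class_ge3 pr_p h1 h2.
have c2 : (3 <= #|z ^: <<[set y; z]>>|)%N.
  have := class_ge3 pr_p h2 h1.
  by rewrite [[set z; y]]setUC.
split; first by [].
move=> yz disj.
have yH : y \in <<[set y; z]>>%G by apply: mem_gen; rewrite !inE eqxx.
have zH : z \in <<[set y; z]>>%G by apply: mem_gen; rewrite !inE eqxx orbT.
exists <<[set y; z]>>%G, y, z; split; first split => //.
- by rewrite gen_subG subUset !sub1set yM zM.
- by rewrite inE class_refl yH.
- by rewrite inE -class_sym yz zH.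
split.
- apply/negP => /eqP E.
  by move: disj; rewrite E setIid => /setP /(_ z); rewrite class_refl inE.
- apply/eqP; rewrite eqEsubset; apply/andP; split.
    by apply: genS; rewrite subUset !sub1set !inE !class_refl ?orbT.
  by rewrite gen_subG subUset !class_subG.
- by rewrite leq_min c1 c2.
Qed.
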